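(* Let $d,a,b$ be positive integers, $r=(d+2b)/d$, $R=(a+d)/d$, with $R\ge3r$, and let $\rho=x_1-r$ with $x_1$ as in the context. If $t\in\mathbb C$ satisfies $\mathrm{Re}(t)>1$, $\mathrm{Im}(t)\ge0$ and $|t-r|>\rho$, then $\Phi(t)<0$.
   Context: For $t\in\mathbb C\setminus\{\pm1,\pm r\}$ let $\Phi(t)=d\log|t+r|-d\log|t-r|+(a+d)(\log|t-1|-\log|t+1|)$. Under $R\ge3r$ there is a unique $x_1\in(r,\infty)$ with $\Phi(x_1)=0$. *)

(* Defs.v *)
(* classical reals. A complex number t is represented by its
   real and imaginary parts (x, y); |t - c| for real c is sqrt((x-c)^2+y^2). *)
From Stdlib Require Import Reals.
Open Scope R_scope.

Definition cmod_shift (x y c : R) : R := sqrt ((x - c) ^ 2 + y ^ 2).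

Definition rr (d b : nat) : R := (INR d + 2 * INR b) / INR d.
Definition RR (d a : nat) : R := (INR a + INR d) / INR d.

Definition Phi (d a b : nat) (x y : R) : R :=
  INR d * ln (cmod_shift x y (- rr d b)) - INR d * ln (cmod_shift x y (rr d b))
  + (INR a + INR d) * (ln (cmod_shift x y 1) - ln (cmod_shift x y (-1))).

(* Main.v *)
Require Import Defs.
From Stdlib Require Import Reals Lra Psatz Ranalysis5.
Open Scope R_scope.

Lemma ln_le_xm1 (y : R) : 0 < y -> ln y <= y - 1.
Proof. intros H. pose proof (exp_ineq1_le (ln y)). rewrite exp_ln in H0; lra. Qed.

Lemma ln_lower (z : R) : 0 <= z -> z/(1+z) <= ln (1+z).
Proof.
  intros H. pose proof (ln_le_xm1 (/(1+z)) ltac:(apply Rinv_0_lt_compat; lra)).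
  rewrite ln_Rinv in H0 by lra.
  replace (z/(1+z)) with (1 - /(1+z)) by (field; lra). lra.
Qed.

Lemma ln_le' (a b : R) : 0 < a -> a <= b -> ln a <= ln b.
Proof. intros Ha [H|H]. left; apply ln_increasing; auto. subst; lra. Qed.

Lemma ln_sqrt' (z : R) : 0 < z -> ln (sqrt z) = ln z / 2.
Proof.
  intros H. assert (Hs: 0 < sqrt z) by (apply sqrt_lt_R0; auto).
  assert (ln z = ln (sqrt z * sqrt z)) by (rewrite sqrt_sqrt; lra).
  rewrite ln_mult in H0 by auto. lra.
Qed.

Lemma ln_div (a b : R) : 0 < a -> 0 < b -> ln (a/b) = ln a - ln b.
Proof. intros. unfold Rdiv. rewrite ln_mult, ln_Rinv; auto with real. Qed.

Lemma polyG (r x u : R) : 1 < r -> 1 < x -> r^2 - 1 <= u -> (x-r)^2 <= u ->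
  2*u <= (r-1)*(2*x-r-1) ->
  (2*(u+(r-1)*(2*x-r-1)) + 8*x - 3*u)^2 < 9*u*(u+4*r*x).
Proof.
  intros Hr Hx Hu1 Hu2 Hk.
  set (q := x - r).
  assert (Hq : 2*q >= r+3) by (unfold q; nra).
  assert (Hq2 : 2*q^2 <= (r-1)*(2*q+r-1)) by (unfold q in *; nra).
  replace x with (r+q) in * by (unfold q; ring).
  nra.
Qed.

Definition F (r Rb x y : R) : R :=
  ln (1 + 4*r*x/((x-r)^2+y^2)) - Rb * ln (1 + 4*x/((x-1)^2+y^2)).

Lemma caseA (r Rb x y : R) : 1 < r -> 3*r <= Rb -> 1 < x ->
  r^2 - 1 <= (x-r)^2+y^2 -> F r Rb x y < 0.
Proof.
  intros Hr HR Hx Hu. unfold F.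
  set (u := (x-r)^2+y^2) in *. set (v := (x-1)^2+y^2).
  assert (Hu0 : 0 < u) by nra.
  assert (Hv0 : 0 < v) by (unfold v; nra).
  assert (Hv : v = u + (r-1)*(2*x-r-1)) by (unfold u, v; ring).
  set (zP := 4*r*x/u). set (zQ := 4*x/v).
  assert (HzP : 0 < zP) by (unfold zP; apply Rdiv_lt_0_compat; nra).
  assert (HzQ : 0 < zQ) by (unfold zQ; apply Rdiv_lt_0_compat; nra).
  pose proof (ln_lower zQ ltac:(lra)) as HlQ.
  destruct (Rlt_or_le (r*v) (Rb*u)) as [HK|HK].
  - assert (HPQ : zP < Rb*zQ).
    { unfold zP, zQ. apply (Rmult_lt_reg_r (u*v)); [nra|].
      field_simplify; try lra. nra. }
    assert (H1 : ln (1+zP) - ln (1+zQ) <= (zP - zQ)/(1+zQ)).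
    { rewrite <- ln_div by lra.
      pose proof (ln_le_xm1 ((1+zP)/(1+zQ)) ltac:(apply Rdiv_lt_0_compat; lra)).
      replace ((zP-zQ)/(1+zQ)) with ((1+zP)/(1+zQ) - 1) by (field; lra). lra. }
    assert (H2 : (zP - zQ)/(1+zQ) < (Rb-1)*(zQ/(1+zQ))).
    { unfold Rdiv. rewrite <- Rmult_assoc. apply Rmult_lt_compat_r.
      apply Rinv_0_lt_compat; lra. lra. }
    assert (H3 : (Rb-1)*(zQ/(1+zQ)) <= (Rb-1)*ln (1+zQ)).
    { apply Rmult_le_compat_l; lra. }
    lra.
  - assert (H3u : 3*u <= v) by nra.
    set (p := sqrt (1+zP)).
    assert (Hp0 : 0 <= p) by apply sqrt_pos.
    assert (Hp2 : p*p = 1+zP) by (apply sqrt_sqrt; lra).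
    assert (HlnP : ln (1+zP) <= 2*(p-1)).
    { replace (ln (1+zP)) with (2 * ln p) by (unfold p; rewrite ln_sqrt'; lra).
      assert (0 < p) by (unfold p; apply sqrt_lt_R0; lra).
      pose proof (ln_le_xm1 p H). lra. }
    assert (HG := polyG r x u Hr Hx Hu ltac:(unfold u; nra) ltac:(nra)).
    rewrite <- Hv in HG.
    assert (Hpu : p*p*u = u + 4*r*x) by (rewrite Hp2; unfold zP; field; lra).
    assert (Hsq : (2*v + 8*x - 3*u)^2 < (3*u*p)^2).
    { replace ((3*u*p)^2) with (9*u*(p*p*u)) by ring. rewrite Hpu. exact HG. }
    assert (Hup : 0 <= 3*u*p) by nra.
    assert (Hkey : 2*v + 8*x < 3*u*(p+1)).
    { destruct (Rle_or_lt (2*v + 8*x - 3*u) 0). nra.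
      assert (0 < (3*u*p - (2*v + 8*x - 3*u))*(3*u*p + (2*v + 8*x - 3*u))) by nra.
      assert (0 < 3*u*p + (2*v + 8*x - 3*u)) by lra.
      assert (0 < 3*u*p - (2*v + 8*x - 3*u)).
      { apply (Rmult_lt_reg_r (3*u*p + (2*v + 8*x - 3*u))); lra. }
      lra. }
    assert (Hfin : 2*(p-1)*(v+4*x) < 12*r*x) by nra.
    assert (Hgoal : 2*(p-1) < Rb * (zQ/(1+zQ))).
    { replace (zQ/(1+zQ)) with (4*x/(v+4*x)) by (unfold zQ; field; lra).
      apply (Rmult_lt_reg_r (v+4*x)); [lra|].
      replace (Rb * (4 * x / (v + 4 * x)) * (v + 4 * x)) with (4*Rb*x) by (field; lra).
      nra. }
    assert (Rb * (zQ/(1+zQ)) <= Rb * ln (1+zQ)) by (apply Rmult_le_compat_l; lra).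
    lra.
Qed.

Lemma caseB (r Rb x y : R) : 1 < r -> 0 < Rb -> 1 < x ->
  0 < (x-r)^2+y^2 -> (x-r)^2+y^2 <= r^2 - 1 ->
  F r Rb x y <= F r Rb (r + sqrt ((x-r)^2+y^2)) 0.
Proof.
  intros Hr HR Hx Hu0 Hu. unfold F.
  set (u := (x-r)^2+y^2) in *.
  set (s := sqrt u).
  assert (Hs0 : 0 < s) by (apply sqrt_lt_R0; auto).
  assert (Hss : s*s = u) by (apply sqrt_sqrt; lra).
  replace ((r + s - r)^2 + 0^2) with u by nra.
  assert (HxX : x <= r + s).
  { destruct (Rle_or_lt x (r+s)); auto. assert ((x-r)^2 > s*s) by nra. unfold u in *. nra. }
  set (v := (x-1)^2+y^2).
  assert (Hv0 : 0 < v) by (unfold v; nra).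
  assert (Hv : v = s*s + (r-1)*(2*x-r-1)) by (unfold v; rewrite Hss; unfold u; ring).
  assert (HX1 : 0 < (r+s-1)^2 + 0^2) by nra.
  assert (A1 : ln (1 + 4*r*x/u) <= ln (1 + 4*r*(r+s)/u)).
  { apply ln_le'. apply Rplus_lt_le_0_compat; [lra|]. apply Rlt_le, Rdiv_lt_0_compat; nra.
    apply Rplus_le_compat_l. unfold Rdiv. apply Rmult_le_compat_r.
    left; apply Rinv_0_lt_compat; lra. nra. }
  assert (Hid : x*(r+s-1)^2 - (r+s)*v = (s*s - r*r + 1)*(x - (r+s))) by (rewrite Hv; ring).
  assert (A2 : 4*(r+s)/((r+s-1)^2+0^2) <= 4*x/v).
  { apply (Rmult_le_reg_r (v*((r+s-1)^2+0^2))). nra.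
    field_simplify; try lra. nra. }
  assert (A3 : ln (1 + 4*(r+s)/((r+s-1)^2+0^2)) <= ln (1 + 4*x/v)).
  { apply ln_le'. apply Rplus_lt_le_0_compat; [lra|]. apply Rlt_le, Rdiv_lt_0_compat; nra. lra. }
  assert (Rb * ln (1 + 4*(r+s)/((r+s-1)^2+0^2)) <= Rb * ln (1 + 4*x/v)) by (apply Rmult_le_compat_l; lra).
  lra.
Qed.

Lemma lnq (A B : R) : 0 < A -> 0 < B ->
  ln (sqrt A) - ln (sqrt B) = ln (A/B) / 2.
Proof. intros. rewrite !ln_sqrt', ln_div; auto. lra. Qed.


Lemma Phi_F_gen (dd Rb r x y : R) : 1 < x -> 0 < r -> 0 < (x-r)^2+y^2 ->
  dd * ln (cmod_shift x y (- r)) - dd * ln (cmod_shift x y r)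
  + (Rb*dd) * (ln (cmod_shift x y 1) - ln (cmod_shift x y (-1)))
  = dd / 2 * F r Rb x y.
Proof.
  intros Hx Hr Hu. unfold cmod_shift, F.
  assert (Hv : 0 < (x-1)^2+y^2) by nra.
  assert (E1 : ln (sqrt ((x - - r)^2 + y^2)) - ln (sqrt ((x-r)^2+y^2))
             = ln (1 + 4*r*x/((x-r)^2+y^2)) / 2).
  { rewrite lnq by nra. f_equal. f_equal. field. lra. }
  assert (E2 : ln (sqrt ((x - - (1))^2 + y^2)) - ln (sqrt ((x-1)^2+y^2))
             = ln (1 + 4*x/((x-1)^2+y^2)) / 2).
  { rewrite lnq by nra. f_equal. f_equal. field. lra. }
  replace (- (1)) with (-1) in E2 by ring.
  transitivity (dd * (ln (sqrt ((x - - r)^2 + y^2)) - ln (sqrt ((x-r)^2+y^2)))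
     - Rb*dd * (ln (sqrt ((x - -1)^2 + y^2)) - ln (sqrt ((x-1)^2+y^2)))); [ring|].
  rewrite E1, E2. unfold Rdiv. ring.
Qed.

Lemma cont_ln_comp (g : R -> R) (z : R) : continuity_pt g z -> 0 < g z ->
  continuity_pt (fun t => ln (g t)) z.
Proof.
  intros Hg Hp. apply (continuity_pt_comp g ln z Hg).
  apply derivable_continuous_pt. exists (/ g z). apply derivable_pt_lim_ln; auto.
Qed.

Lemma cont_h (r Rb z : R) : 1 < r -> r < z -> continuity_pt (fun t => F r Rb t 0) z.
Proof.
  intros Hr Hz. unfold F.
  apply continuity_pt_minus.
  - apply cont_ln_comp.
    + apply continuity_pt_plus. apply continuity_pt_const; intros ? ?; auto.
      apply continuity_pt_div. reg. reg. nra.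
    + assert (0 < 4*r*z/((z-r)^2+0^2)) by (apply Rdiv_lt_0_compat; nra). lra.
  - apply continuity_pt_mult. apply continuity_pt_const; intros ? ?; auto.
    apply cont_ln_comp.
    + apply continuity_pt_plus. apply continuity_pt_const; intros ? ?; auto.
      apply continuity_pt_div. reg. reg. nra.
    + assert (0 < 4*z/((z-1)^2+0^2)) by (apply Rdiv_lt_0_compat; nra). lra.
Qed.

Theorem lemma4p12 (d a b : nat) (hd : (0 < d)%nat) (ha : (0 < a)%nat) (hb : (0 < b)%nat)
  (hR : RR d a >= 3 * rr d b)
  (x1 : R) (hx1 : rr d b < x1) (hPhi1 : Phi d a b x1 0 = 0)
  (huniq : forall x, rr d b < x -> Phi d a b x 0 = 0 -> x = x1)
  (x y : R) (hx : x > 1) (hy : y >= 0)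
  (hrho : cmod_shift x y (rr d b) > x1 - rr d b) :
  Phi d a b x y < 0.
Proof.
  assert (Hd : 0 < INR d) by (apply lt_0_INR; auto).
  assert (Hb : 0 < INR b) by (apply lt_0_INR; auto).
  assert (Hr : 1 < rr d b).
  { unfold rr. apply (Rmult_lt_reg_r (INR d)); auto. field_simplify; lra. }
  assert (HRd : INR a + INR d = RR d a * INR d) by (unfold RR; field; lra).
  assert (HPF : forall x y, 1 < x -> 0 < (x - rr d b)^2 + y^2 ->
            Phi d a b x y = INR d / 2 * F (rr d b) (RR d a) x y).
  { intros x' y' Hx' Hu'. unfold Phi. rewrite HRd. apply Phi_F_gen; auto; lra. }
  set (r := rr d b) in *. set (Rb := RR d a) in *.
  assert (Hreal : forall X, x1 < X -> F r Rb X 0 < 0).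
  { intros X HX. destruct (Rlt_or_le (F r Rb X 0) 0) as [H|H]; auto. exfalso.
    assert (HXpos : 0 < (X - r)^2 + 0^2) by nra.
    destruct H as [H|H].
    2:{ assert (X = x1). apply huniq. lra. rewrite HPF by lra. rewrite <- H. ring. lra. }
    set (Y := X + 2*r).
    assert (HY : F r Rb Y 0 < 0) by (apply caseA; unfold Y; nra).
    destruct (IVT_interv (fun t => - F r Rb t 0) X Y) as [z [Hz1 Hz2]].
    - intros t Ht. apply continuity_pt_opp. apply cont_h; lra.
    - unfold Y; lra.
    - lra.
    - lra.
    - assert (z = x1). apply huniq. lra. rewrite HPF by nra. replace (F r Rb z 0) with 0 by lra. ring.
      lra. }
  set (u := (x-r)^2+y^2).
  assert (Hu0 : 0 < u).
  { unfold cmod_shift in hrho. fold u in hrho.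
    destruct (Rle_or_lt u 0) as [H|H]; auto.
    assert (0 <= u) by (unfold u; apply Rplus_le_le_0_compat; apply pow2_ge_0). assert (u = 0) by lra. rewrite H1, sqrt_0 in hrho. lra. }
  rewrite HPF by (auto; lra).
  assert (F r Rb x y < 0).
  { destruct (Rle_or_lt (r^2-1) u).
    - apply caseA; auto; lra.
    - eapply Rle_lt_trans. apply caseB; auto; try lra. fold u; lra.
      apply Hreal. unfold cmod_shift in hrho. fold u in hrho |- *. lra. }
  nra.
Qed.
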